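(* Let $k\ge3$ and let $u\in I_k$ be a renewed vertex. Then for every $n\ge1$ and every $v\in I^u_n$: (i) $\sigma(v)\subseteq\tilde I^u_n$; (ii) $\alpha_i(v)\subseteq I^u_{n-i}$ for each $0\le i\le n$. Moreover, $I^u_n\subseteq\mathcal U^u_n$ for every $n\ge0$, and for every $m\ge k$, every $v\in V^u_{m-k}$ and every $v'\in V_m\setminus V^u_{m-k}$, any path in $G_m$ from $v$ to $v'$ passes through $u$.
   Context: Ulam–Harris labels: $\mathcal U_n=\mathbb N^n$ ($n\ge0$, $\mathcal U_0=\{\emptyset\}$), $\mathcal U=\bigcup_{n\ge0}\mathcal U_n$; for $u=u_1\dots u_k$, $v=v_1\dots v_l$ write $uv=u_1\dots u_kv_1\dots v_l$. Fix $p>-1$, $q\in[0,1]$, and let $(\xi_u)_{u\in\mathcal U}$ be i.i.d. Poisson with mean $1+p$, and $(\delta_{u,v})_{u,v\in\mathcal U}$, $(\mu_{\{u,v\}})_{u\ne v\in\mathcal U}$ i.i.d. Bernoulli with mean $q$, all independent. The process $\mathcal G(p,q)=(G_n)_{n\ge0}$, $G_n=(V_n,E_n)$: $G_0=(\{\emptyset\},\emptyset)$, and $I_m=V_m\cap\mathcal U_m$. Given $G_{n-1}$ ($n\ge1$): (1) for $u\in I_{n-1}$ let $\mathcal K_u=\{v\in V_{n-1}:d_{G_{n-1}}(u,v)=3\}$ and $\mathcal C_u=\{j\in\mathbb N:j\le\xi_u,\ \delta_{v,uj}=0\ \forall v\in\mathcal K_u\}$; let $\tilde G_n$ have vertex set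 $V_{n-1}\cup\{ui:u\in I_{n-1},i\in\mathcal C_u\}$ and edge set $E_{n-1}\cup\{\{u,ui\}:u\in I_{n-1},i\in\mathcal C_u\}$, and $\tilde I_n$ its set of vertices in $\mathcal U_n$. (2) For $u,v\in\tilde I_n$ write $u\overset{m}{\sim}v$ iff $d_{\tilde G_n}(u,v)=4$ and $\mu_{\{u,v\}}=1$; let $\sim$ be the equivalence relation on $\tilde I_n$ generated by $\overset m\sim$, and $\pi(u)$ the lexicographically smallest element of the class of $u$. Then $V_n=V_{n-1}\cup\{\pi(u):u\in\tilde I_n\}$, $E_n=E_{n-1}\cup\{\{v,\pi(vi)\}:v\in I_{n-1},i\in\mathcal C_v\}$. Notation: for $w\in I_n$, $\alpha(w)=\bigcup_{0\le j\le n}\{x\in I_{n-j}:d_{G_n}(x,w)=j\}$ and $\alpha_i(w)=\alpha(w)\cap I_{n-i}$ for $i\le n$. For $v\in I_n$, $\sigma(v)=\{\tilde v\in\tilde I_n:\tilde v\sim v\}$. A vertex $v\in I_n$ ($n\ge3$) is renewed if exactly three vertices $w\in V_n$ satisfy $1\le d_{G_n}(v,w)\le3$. For $u\in I_k$ and $n\ge0$: $I^u_n=\{v\in I_{k+n}:u\in\alpha(v)\}$, $V^u_n=\bigcup_{j\le n}I^u_j$, $\mathcal U^u_n=\{uv:v\in\mathcal U_n\}$, and for $n\ge1$, $\tilde I^u_n=\{wi:w\in I^u_{n-1},\ wi\in\tilde I_{k+n}\}$. *)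

(* Defs.v *)
(* relational (Prop-valued) rendering of the
   random graph process G(p,q) for a FIXED realization of the random variables. *)
From mathcomp Require Import all_boot.
From Stdlib Require Import Relations.
Set Implicit Arguments. Unset Strict Implicit. Unset Printing Implicit Defensive.

(* Ulam-Harris labels: finite sequences of positive naturals; u i = rcons u i,
   u v = u ++ v. *)
Definition label := seq nat.

Record realization := Realization {
  xi : label -> nat;
  delta : label -> label -> bool;
  mu : label -> label -> bool }.

Record graph := Graph { gV : label -> Prop; gE : label -> label -> Prop }.

Fixpoint wlk (E : label -> label -> Prop) (j : nat) (x y : label) : Prop :=
  match j with
  | 0 => x = y
  | j'.+1 => exists z, E x z /\ wlk E j' z y
  end.

Definition dist (E : label -> label -> Prop) (x y : label) (j : nat) : Prop :=
  wlk E j x y /\ forall j', j' < j -> ~ wlk E j' x y.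

Fixpoint lexle (s t : label) : bool :=
  match s, t with
  | [::], _ => true
  | _ :: _, [::] => false
  | a :: s', b :: t' => (a < b) || ((a == b) && lexle s' t')
  end.

Section Process.
Variable r : realization.

(* parent level m = n-1 ; Gp = G_{n-1} *)
Definition Iprev (Gp : graph) (m : nat) (x : label) : Prop := gV Gp x /\ size x = m.

Definition Kset (Gp : graph) (u v : label) : Prop := gV Gp v /\ dist (gE Gp) u v 3.

Definition Cset (Gp : graph) (u : label) (j : nat) : Prop :=
  1 <= j <= xi r u /\ forall v, Kset Gp u v -> delta r v (rcons u j) = false.

Definition tildeG (Gp : graph) (m : nat) : graph :=
  Graph (fun x => gV Gp x \/ exists u j, Iprev Gp m u /\ Cset Gp u j /\ x = rcons u j)
        (fun x y => gE Gp x y \/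
           exists u j, Iprev Gp m u /\ Cset Gp u j /\
             ((x = u /\ y = rcons u j) \/ (y = u /\ x = rcons u j))).

Definition Itil_of (Gp : graph) (m : nat) (x : label) : Prop :=
  gV (tildeG Gp m) x /\ size x = m.+1.

Definition msim (Gp : graph) (m : nat) (x y : label) : Prop :=
  Itil_of Gp m x /\ Itil_of Gp m y /\ dist (gE (tildeG Gp m)) x y 4 /\ mu r x y = true.

Definition simr (Gp : graph) (m : nat) (x y : label) : Prop :=
  Itil_of Gp m x /\ Itil_of Gp m y /\ clos_refl_sym_trans label (msim Gp m) x y.

Definition isPi (Gp : graph) (m : nat) (x p : label) : Prop :=
  simr Gp m x p /\ forall y, simr Gp m x y -> lexle p y.

Definition stepG (Gp : graph) (m : nat) : graph :=
  Graph (fun x => gV Gp x \/ exists u, Itil_of Gp m u /\ isPi Gp m u x)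
        (fun x y => gE Gp x y \/
           (exists i, Iprev Gp m x /\ Cset Gp x i /\ isPi Gp m (rcons x i) y) \/
           (exists i, Iprev Gp m y /\ Cset Gp y i /\ isPi Gp m (rcons y i) x)).

Definition G0 : graph := Graph (fun x => x = [::]) (fun _ _ => False).

Fixpoint G (n : nat) : graph :=
  match n with 0 => G0 | m.+1 => stepG (G m) m end.

Definition I (n : nat) (x : label) : Prop := gV (G n) x /\ size x = n.

Definition Itil (n : nat) (x : label) : Prop := Itil_of (G n.-1) n.-1 x /\ 0 < n.

Definition sim (n : nat) (x y : label) : Prop := 0 < n /\ simr (G n.-1) n.-1 x y.

Definition sigma (n : nat) (v vt : label) : Prop := Itil n vt /\ sim n vt v.

Definition alpha (n : nat) (w x : label) : Prop :=
  exists j, j <= n /\ I (n - j) x /\ dist (gE (G n)) x w j.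

Definition alpha_i (n i : nat) (w x : label) : Prop := alpha n w x /\ I (n - i) x.

Definition near3 (n : nat) (v w : label) : Prop :=
  gV (G n) w /\ exists j, 1 <= j <= 3 /\ dist (gE (G n)) v w j.

Definition renewed (n : nat) (v : label) : Prop :=
  3 <= n /\ I n v /\
  exists w1 w2 w3, [/\ w1 <> w2, w1 <> w3 & w2 <> w3] /\
    near3 n v w1 /\ near3 n v w2 /\ near3 n v w3 /\
    forall w, near3 n v w -> w = w1 \/ w = w2 \/ w = w3.

Definition Iu (k : nat) (u : label) (n : nat) (v : label) : Prop :=
  I (k + n) v /\ alpha (k + n) v u.

Definition Vu (k : nat) (u : label) (n : nat) (v : label) : Prop :=
  exists j, j <= n /\ Iu k u j v.

Definition Itu (k : nat) (u : label) (n : nat) (x : label) : Prop :=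
  exists w i, Iu k u n.-1 w /\ x = rcons w i /\ Itil (k + n) x.

End Process.

Definition Uu (u : label) (n : nat) (x : label) : Prop :=
  exists w : label, size w = n /\ all (fun i => 0 < i) w /\ x = u ++ w.

Fixpoint walkseq (E : label -> label -> Prop) (x : label) (p : seq label) : Prop :=
  match p with
  | [::] => True
  | y :: p' => E x y /\ walkseq E y p'
  end.

(* Main.v *)
Require Import Defs.
From Stdlib Require Import Relations.
From mathcomp Require Import all_boot.
From mathcomp Require Import zify.
Set Implicit Arguments. Unset Strict Implicit. Unset Printing Implicit Defensive.
Lemma wlk_size (E : label -> label -> Prop)
  (Hsz : forall a b, E a b -> size b = (size a).+1 \/ size a = (size b).+1)
  n x y : wlk E n x y -> size y <= size x + n /\ size x <= size y + n.
Proof.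
elim: n x => [|n IH] x /= ; first by move=> ->; lia.
move=> [z [Exz Wzy]]; have := IH _ Wzy; have := Hsz _ _ Exz; lia.
Qed.

Lemma wlk_snoc E n x y z : wlk E n x y -> E y z -> wlk E n.+1 x z.
Proof.
elim: n x => [|n IH] x /=.
  by move=> -> Eyz; exists z; split.
move=> [w [Exw Wwy]] Eyz; exists w; split => //; exact: IH.
Qed.

Lemma wlk_last E n x y : wlk E n.+1 x y -> exists z, wlk E n x z /\ E z y.
Proof.
elim: n x => [|n IH] x /=.
  by move=> [z [Exz Hz]]; exists x; split => //; rewrite -Hz.
move=> [w [Exw Wwy]]; have [z [Wwz Ezy]] := IH _ Wwy.
by exists z; split => //; exists w.
Qed.

Lemma wlk_mono (E E' : label -> label -> Prop) n x y :
  (forall a b, E a b -> E' a b) -> wlk E n x y -> wlk E' n x y.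
Proof. move=> H; elim: n x => [|n IH] x //= [z [Exz Wzy]]; exists z; split; auto. Qed.

Lemma wlk_rev E n x y : (forall a b, E a b -> E b a) -> wlk E n x y -> wlk E n y x.
Proof.
move=> Hs; elim: n x => [|n IH] x /=; first by move=> ->.
move=> [z [Exz Wzy]]; exact: wlk_snoc (IH _ Wzy) (Hs _ _ Exz).
Qed.
Section GProps.
Variable r : realization.
Lemma isPi_Itil Gp m a b : isPi r Gp m a b -> Itil_of r Gp m a /\ Itil_of r Gp m b.
Proof. by move=> [[Ha [Hb _]] _]. Qed.

Lemma G_props m :
  (forall x, gV (G r m) x -> size x <= m) /\
  (forall x y, gE (G r m) x y -> gV (G r m) x /\ gV (G r m) y /\
      (size y = (size x).+1 \/ size x = (size y).+1)).
Proof.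
elim: m => [|m [IHV IHE]] /=.
  by split => [x ->|x y []].
split.
  move=> x [/IHV|[a [_ /isPi_Itil [_ [_ ->]]]]]; lia.
move=> x y [/IHE [Vx [Vy Hs]]|[[i [[Vx Sx] [Ci P]]]|[i [[Vy Sy] [Ci P]]]]].
- by split; [left|split; [left|]].
- have [_ [_ Sy]] := isPi_Itil P.
  split; [by left|split; [right; by exists (rcons x i); split => //; case: (isPi_Itil P)|]].
  by left; rewrite Sy Sx.
- have [_ [_ Sx]] := isPi_Itil P.
  split; [right; by exists (rcons y i); split => //; case: (isPi_Itil P)|split; [by left|]].
  by right; rewrite Sy Sx.
Qed.

Lemma GV_size m x : gV (G r m) x -> size x <= m.
Proof. exact: (G_props m).1. Qed.
Lemma GE_props m x y : gE (G r m) x y -> gV (G r m) x /\ gV (G r m) y /\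
      (size y = (size x).+1 \/ size x = (size y).+1).
Proof. exact: (G_props m).2. Qed.
Lemma GE_sz m a b : gE (G r m) a b -> size b = (size a).+1 \/ size a = (size b).+1.
Proof. by move/GE_props=> [_ [_ H]]. Qed.

Lemma GV_mono m m' x : m <= m' -> gV (G r m) x -> gV (G r m') x.
Proof.
move=> /subnK <-; elim: (m' - m) => [|d IH] //= H; left; exact: IH.
Qed.
Lemma GE_mono m m' x y : m <= m' -> gE (G r m) x y -> gE (G r m') x y.
Proof.
move=> /subnK <-; elim: (m' - m) => [|d IH] //= H; left; exact: IH.
Qed.

Lemma GE_lower m s x y : gE (G r m) x y -> size x <= s -> size y <= s -> s <= m ->
  gE (G r s) x y.
Proof.
elim: m => [|m IH] H Hx Hy Hs.
  by move: Hs; rewrite leqn0 => /eqP ->.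
case: (ltngtP s m.+1) Hs => // Hs _; last by rewrite Hs.
move: H => /= [H|[[i [[_ Sx] [_ P]]]|[i [[_ Sy] [_ P]]]]].
- exact: IH.
- have [_ [_ Sy]] := isPi_Itil P; lia.
- have [_ [_ Sx]] := isPi_Itil P; lia.
Qed.

Lemma GV_lower m x : gV (G r m) x -> gV (G r (size x)) x.
Proof.
elim: m => [|m IH] /=; first by move=> ->.
move=> [/IH //|[a [Ia P]]].
have [_ [_ Sx]] := isPi_Itil P; rewrite Sx /=; right; by exists a.
Qed.

Lemma GE_sym m x y : gE (G r m) x y -> gE (G r m) y x.
Proof.
elim: m x y => [|m IH] x y //= [H|[H|H]]; [left; exact: IH|by right; right|by right; left].
Qed.

Lemma GV_parent m x : gV (G r m) x -> 0 < size x ->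
  exists y, gE (G r m) x y /\ size x = (size y).+1.
Proof.
elim: m x => [|m IH] x /=; first by move=> ->.
move=> [Vx Hx|[a [[Va Sa] P]]].
  have [y [E Sy]] := IH _ Vx Hx; exists y; split => //; by left.
move: Va => /= [/GV_size|[w [j [Iw [Cw Ea]]]]]; first by rewrite Sa; lia.
exists w; split; first by right; right; exists j; rewrite -Ea.
have [_ [_ Sx]] := isPi_Itil P; case: Iw => _ ->; by [].
Qed.

Lemma wlk_lower m s n x y : wlk (gE (G r m)) n x y -> size y = size x + n ->
  size y <= s -> s <= m -> wlk (gE (G r s)) n x y.
Proof.
elim: n x => [|n IH] x //= [z [Exz Wzy]] Sy Hy Hs.
have := wlk_size (@GE_sz m) Wzy; have := GE_sz Exz => Hz Hw.
have Sz : size z = (size x).+1 by lia.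
exists z; split; last by apply: IH => //; lia.
apply: GE_lower Exz _ _ Hs; lia.
Qed.
End GProps.

Lemma rcons_eq1 (s1 s2 : label) x1 x2 : rcons s1 x1 = rcons s2 x2 -> s1 = s2.
Proof. by move/rcons_inj => [->]. Qed.

Section Main.
Variables (r : realization) (k : nat) (u : label).
Hypotheses (Hk : 3 <= k) (Hu : I r k u) (Hren : renewed r k u).

Lemma Su : size u = k. Proof. by case: Hu. Qed.

Lemma Iu_alpha n v : Iu r k u n v -> I r (k+n) v /\ wlk (gE (G r (k+n))) n u v.
Proof.
move=> [Iv [j [Hj [[_ S] [W _]]]]]; have := Su; rewrite S => Hj'.
have E : j = n by lia.
by subst j.
Qed.

Lemma Iu_intro n v : I r (k+n) v -> wlk (gE (G r (k+n))) n u v -> Iu r k u n v.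
Proof.
move=> Iv W; split => //; exists n; split; first lia.
split; first by rewrite addnK.
split => // j' Hj' W'; have := wlk_size (@GE_sz r _) W'; case: Iv => _; rewrite Su; lia.
Qed.

Lemma Iu0 v : Iu r k u 0 v -> v = u.
Proof. by move/Iu_alpha => [_ /= ->]. Qed.

Lemma Iu0u : Iu r k u 0 u.
Proof. by apply: Iu_intro => //; rewrite addn0. Qed.

Lemma Iu_size n v : Iu r k u n v -> size v = k + n.
Proof. by move=> [[_ ->] _]. Qed.

Lemma Vu_Iu m v : Vu r k u m v -> size v <= k + m /\ Iu r k u (size v - k) v.
Proof.
move=> [j [Hj Iv]]; have S := Iu_size Iv; split; first lia.
by rewrite S addKn.
Qed.

Definition Closed m := forall y y', Vu r k u (m - k) y -> y <> u ->
  gE (G r m) y y' -> Vu r k u (m - k) y'.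

Lemma child_in m j y y' : Iu r k u j y -> gE (G r m) y y' -> size y' = k + j.+1 ->
  Iu r k u j.+1 y'.
Proof.
move=> /Iu_alpha [[_ Sy] W] E Sy'.
have [_ [Vy' _]] := GE_props E; have Hm := GV_size Vy'.
apply: Iu_intro; first by split => //; rewrite -Sy'; exact: GV_lower Vy'.
apply: (wlk_snoc (y := y)).
  apply: wlk_mono W => a b; apply: GE_mono; lia.
apply: GE_lower E _ _ _; lia.
Qed.

Lemma parent_exists j y : Iu r k u j.+1 y -> exists z i, Iu r k u j z /\
  Iprev (G r (k+j)) (k+j) z /\ Cset r (G r (k+j)) z i /\
  isPi r (G r (k+j)) (k+j) (rcons z i) y.
Proof.
move=> /Iu_alpha [[_ Sy] /wlk_last [z [W E]]].
have := wlk_size (@GE_sz r _) W; have := GE_sz E; rewrite Su => H1 H2.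
have Sz : size z = k + j by lia.
move: E; rewrite addnS /= => [[E|[[i [Iz [Cz P]]]|[i [[_ Sy'] _]]]]].
- have [_ [/GV_size Vy _]] := GE_props E; lia.
- exists z, i; split => //; apply: Iu_intro; first by case: Iz.
  apply: wlk_lower W _ _ _; rewrite ?Su; lia.
- lia.
Qed.

Lemma TE_sym m x y : gE (tildeG r (G r m) m) x y -> gE (tildeG r (G r m) m) y x.
Proof.
move=> /= [E|[a [j [Ia [Ca [[-> ->]|[-> ->]]]]]]]; first by left; exact: GE_sym.
- by right; exists a, j; split => //; split => //; right.
- by right; exists a, j; split => //; split => //; left.
Qed.

Lemma TE_up m x y : gE (tildeG r (G r m) m) x y -> size x = m.+1 ->
  exists j, Iprev (G r m) m y /\ x = rcons y j.
Proof.
move=> /= [E|[a [j [[Va Sa] [Ca [[-> ->]|[-> ->]]]]]]] Sx.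
- have [/GV_size Vx _] := GE_props E; lia.
- lia.
- by exists j.
Qed.

Lemma TE_mid m z x w : gE (tildeG r (G r m) m) z x -> gE (tildeG r (G r m) m) x w ->
  size z = m -> size w = m -> (gE (G r m) z x /\ gE (G r m) x w) \/ w = z.
Proof.
move=> E1 E2 Sz Sw; move: E1 => /= [E1|[a [j [[Va Sa] [Ca [[Ez Ex]|[Ex Ez]]]]]]].
- have [_ [/GV_size Vx _]] := GE_props E1.
  move: E2 => /= [E2|[b [j [[Vb Sb] [Cb [[Ex Ew]|[Ew Ex]]]]]]].
  + by left.
  + move: Sw; rewrite Ew size_rcons Sb; lia.
  + move: Vx; rewrite Ex size_rcons; lia.
- have Sx : size x = m.+1 by rewrite Ex size_rcons Sa.
  have [j' [_ Ex']] := TE_up E2 Sx.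
  by right; rewrite Ez; move: Ex'; rewrite Ex => /rcons_eq1.
- move: Sz; rewrite Ez size_rcons; lia.
Qed.

Lemma four_pigeon (a b c d w1 w2 w3 : label) :
  size a = k -> size b = k - 1 -> size c = k - 2 -> size d = k - 3 ->
  (a = w1 \/ a = w2 \/ a = w3) -> (b = w1 \/ b = w2 \/ b = w3) ->
  (c = w1 \/ c = w2 \/ c = w3) -> (d = w1 \/ d = w2 \/ d = w3) -> False.
Proof.
move=> Sa Sb Sc Sd.
case=> [?|[?|?]]; subst a; case=> [?|[?|?]]; subst b; case=> [?|[?|?]]; subst c;
  case=> [?|[?|?]]; subst d; lia.
Qed.

Lemma near_walk j y : wlk (gE (G r k)) j u y -> 1 <= j <= 3 -> k = size y + j ->
  gV (G r k) y -> near3 r k u y.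
Proof.
move=> W Hj Sy Vy; split => //; exists j; split => //; split => // j' Hj' W'.
have := wlk_size (@GE_sz r _) W'; rewrite Su; lia.
Qed.

Lemma renewed_lemma x w : gE (G r k) u x -> gE (G r k) x w -> size w = k -> w = u.
Proof.
move=> E1 E2 Sw; case: (eqVneq w u) => // Hwu; exfalso.
have [_ [Vx _]] := GE_props E1; have [_ [Vw _]] := GE_props E2.
have Sx : size x = k - 1.
  have := GV_size Vx; have := GE_sz E1; rewrite Su; lia.
have [g [Eg Sg]] := GV_parent Vx (ltac:(lia)).
have [_ [Vg _]] := GE_props Eg.
have [h [Eh Sh]] := GV_parent Vg (ltac:(lia)).
have [_ [Vh _]] := GE_props Eh.
have N1 : near3 r k u x.
  apply: (near_walk (j := 1)) => //; [by exists x | lia].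
have N2 : near3 r k u g.
  apply: (near_walk (j := 2)) => //; [by exists x; split => //; exists g | lia].
have N3 : near3 r k u h.
  apply: (near_walk (j := 3)) => //; [by exists x; split => //; exists g; split => //; exists h | lia].
have N0 : near3 r k u w.
  split => //; exists 2; split => //; split; first by exists x; split => //; exists w.
  case=> [|[|]] // _ /=; first by move=> E; rewrite E eqxx in Hwu.
  move=> [z [E Ez]]; rewrite Ez in E; have := GE_sz E; rewrite Su Sw; lia.
case: Hren => _ [_ [w1 [w2 [w3 [_ [_ [_ [_ Hall]]]]]]]].
apply: (four_pigeon (a := w) (b := x) (c := g) (d := h)) (Hall _ N0) (Hall _ N1)
  (Hall _ N2) (Hall _ N3); lia.
Qed.

Definition Pj j (a : label) := forall w i, a = rcons w i -> Iu r k u j w.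

Lemma key j a b : Closed (k+j) -> Itil_of r (G r (k+j)) (k+j) a ->
  Itil_of r (G r (k+j)) (k+j) b ->
  wlk (gE (tildeG r (G r (k+j)) (k+j))) 4 a b -> Pj j a -> Pj j b.
Proof.
move=> HC [Va Sa] [Vb Sb] W Pa w' i' Eb.
move: Va => /= [/GV_size|[z [i [[Vz Sz] [Cz Ea]]]]]; first lia.
have Iz := Pa _ _ Ea.
have Sw' : size w' = k+j by move: Sb; rewrite Eb size_rcons => [[]].
move: W => /= [x1 [E1 [x2 [E2 [x3 [E3 [x4 [E4 E5]]]]]]]].
have [j1 [_ Ea1]] := TE_up E1 Sa.
have ? : x1 = z by move: Ea1; rewrite Ea => /rcons_eq1.
subst x1.
have Sx4 : size x4 = (k+j).+1 by rewrite E5.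
have [j3 [_ Eb3]] := TE_up (TE_sym E4) Sx4.
have ? : x3 = w' by move: Eb3; rewrite E5 Eb => /rcons_eq1.
subst x3.
case: (TE_mid E2 E3 Sz Sw') => [[F1 F2]|->] //.
case: (eqVneq z u) => [Ezu|Hzu].
  subst z; have j0 : j = 0 by move: Sz; rewrite Su; lia.
  subst j; rewrite addn0 in F1 F2 Sw'.
  by rewrite (renewed_lemma F1 F2 Sw'); exact: Iu0u.
have Vz' : Vu r k u (k + j - k) z by rewrite addKn; exists j.
have Hzu' : z <> u by apply/eqP.
have Vx2 := HC _ _ Vz' Hzu' F1.
case: (eqVneq x2 u) => [Ex2|Hx2].
  subst x2; have j1' : j = 1.
    have := GE_sz F2; rewrite Su Sw'; have := Iu_size Iz; rewrite Sz; lia.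
  subst j; apply: (child_in Iu0u F2); by rewrite Sw'.
have Hx2' : x2 <> u by apply/eqP.
have [_ ] := Vu_Iu (HC _ _ Vx2 Hx2' F2).
by rewrite Sw' addKn.
Qed.

Lemma prop j a b : Closed (k+j) ->
  clos_refl_sym_trans label (msim r (G r (k+j)) (k+j)) a b -> (Pj j a <-> Pj j b).
Proof.
move=> HC; elim => {a b}.
- move=> a b [Ia [Ib [[W _] _]]]; split; first exact: key.
  apply: key => //; apply: wlk_rev W; exact: TE_sym.
- by [].
- by move=> a b _ [H1 H2]; split.
- by move=> a b c _ [H1 H2] _ [H3 H4]; split; auto.
Qed.

Lemma parent_in j y y' i : Closed (k+j) -> Iu r k u j.+1 y ->
  isPi r (G r (k+j)) (k+j) (rcons y' i) y -> Iu r k u j y'.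
Proof.
move=> HC Iy [[_ [_ C2]] _].
have [z [i0 [Iz [_ [_ [[_ [_ C1]] _]]]]]] := parent_exists Iy.
have C := rst_trans _ _ _ _ _ C1 (rst_sym _ _ _ _ C2).
have [H _] := prop HC C.
have Pz : Pj j (rcons z i0) by move=> w i1 /esym /rcons_eq1 ->.
exact: (H Pz y' i (erefl _)).
Qed.

Lemma closed_all m : Closed m.
Proof.
elim/ltn_ind: m => m IH y y' [j [Hj Iy]] Hyu E.
case: j Hj Iy => [|j] Hj Iy; first by have := Iu0 Iy.
have Sy := Iu_size Iy.
have [Vy [Vy' _]] := GE_props E.
have Hm := GV_size Vy; have Hm' := GV_size Vy'.
case: (GE_sz E) => Sy'.
  exists j.+2; split; first lia.
  apply: child_in Iy E _; lia.
exists j; split; first lia.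
have E' : gE (G r (k + j).+1) y y' by apply: GE_lower E _ _ _; lia.
move: E' => /= [E'|[[i [[_ S] _]]|[i [_ [_ P]]]]].
- have [/GV_size ? _] := GE_props E'; lia.
- lia.
- apply: parent_in P; last exact: Iy.
  apply: IH; lia.
Qed.

Lemma down_walk n i x v : Iu r k u n v -> i <= n -> wlk (gE (G r (k+n))) i x v ->
  size v = size x + i -> Iu r k u (n - i) x.
Proof.
move=> Iv; elim: i x => [|i IH] x Hi /=.
  by move=> -> _; rewrite subn0.
move=> [z [E W]] Sv.
have := wlk_size (@GE_sz r _) W; have := GE_sz E => H1 H2.
have Iz := IH z (ltnW Hi) W (ltac:(lia)).
have Sz := Iu_size Iz.
have Vz : Vu r k u (k + n - k) z by rewrite addKn; exists (n - i); split => //; lia.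
have Hzu : z <> u by move=> Ez; move: Sz; rewrite Ez Su; lia.
have [Sx Ix] := Vu_Iu (closed_all Vz Hzu (GE_sym E)).
have -> : n - i.+1 = size x - k by have := Iu_size Iv; lia.
exact: Ix.
Qed.

Lemma Iu_Uu n v : Iu r k u n v -> Uu u n v.
Proof.
elim: n v => [|n IH] v Iv.
  by rewrite (Iu0 Iv); exists [::]; rewrite cats0.
have [z [i0 [Iz [_ [_ P]]]]] := parent_exists Iv.
have [[_ [[Vv Sv] C]] _] := P.
move: Vv => /= [/GV_size|[w [j [Iw [[Hj _] Ev]]]]]; first lia.
have Iw' : Iu r k u n w.
  have Pz : Pj n (rcons z i0) by move=> w' i1 /esym /rcons_eq1 ->.
  have [H _] := prop (closed_all (m:=k+n)) C.
  exact: (H Pz w j Ev).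
have [s [Ss [As Ew]]] := IH _ Iw'.
exists (rcons s j); rewrite size_rcons Ss all_rcons As Ev Ew rcons_cat; split => //.
by rewrite andbT; case/andP: Hj.
Qed.

Lemma sep m v v' p : Vu r k u (m - k) v -> ~ Vu r k u (m - k) v' ->
  walkseq (gE (G r m)) v p -> last v p = v' -> u \in v :: p.
Proof.
elim: p v => [|y p IH] v Vv Nv' /=.
  by move=> _ E; rewrite E in Vv.
move=> [E W] L; case: (eqVneq v u) => [->|Hvu]; first by rewrite inE eqxx.
have Hvu' : v <> u by apply/eqP.
have Vy := closed_all Vv Hvu' E.
by rewrite inE (IH y Vy Nv' W L) orbT.
Qed.

End Main.

Theorem lemma4p1 (r : realization)
  (mu_sym : forall a b, mu r a b = mu r b a)
  (k : nat) (u : label) :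
  3 <= k -> I r k u -> renewed r k u ->
  (forall n, 1 <= n -> forall v, Iu r k u n v ->
     (forall x, sigma r (k + n) v x -> Itu r k u n x) /\
     (forall i, i <= n -> forall x, alpha_i r (k + n) i v x -> Iu r k u (n - i) x))
  /\ (forall n v, Iu r k u n v -> Uu u n v)
  /\ (forall m, k <= m -> forall v v',
        Vu r k u (m - k) v -> gV (G r m) v' -> ~ Vu r k u (m - k) v' ->
        forall p : seq label, uniq (v :: p) -> walkseq (gE (G r m)) v p ->
        last v p = v' -> u \in v :: p).
Proof.
move=> Hk Hu Hren; split; last split.
- case=> [|n] // _ v Iv; split.
  + move=> x [[Ix Hpos] [_ S]].
    move: Ix S; rewrite addnS /= => Ix S.
    have [z [i0 [Iz [_ [_ [[_ [_ C1]] _]]]]]] := parent_exists Hk Hu Iv.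
    case: (Ix) => /= [[/(GV_size) |[w [j [Iw [Cw Ex]]]]]] Sx; first lia.
    exists w, j; split; last split => //; last by rewrite addnS.
    have [_ [_ C2]] := S.
    have C := rst_trans _ _ _ _ _ C1 (rst_sym _ _ _ _ C2).
    have [H _] := prop Hk Hu Hren (closed_all Hk Hu Hren (m:=k+n)) C.
    have Pz : Pj r k u n (rcons z i0) by move=> w' i1 /esym /rcons_eq1 ->.
    exact: (H Pz w j Ex).
  + move=> i Hi x [[j [Hj [[_ Sx] [W _]]]] [_ Sx']].
    have ? : j = i by lia.
    subst j; apply: (down_walk Hk Hu Hren Iv Hi W).
    rewrite Sx; case: Iv => [[_ ->]] _; lia.
- by move=> n v; exact: (Iu_Uu Hk Hu Hren).
- move=> m _ v v' Vv _ Nv' p _ W L; exact: (sep Hk Hu Hren Vv Nv' W L).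
Qed.
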